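(* Let $H\Gamma=(C,\{\mathcal W,\mathcal X,\mathcal Y,\mathcal Z\},G_{zx},G_{wy})$ be a Lagrangian hypercube diagram and $L$ the embedded Legendrian torus obtained as the lift of the Lagrangian torus it determines, with $H_1(L)=\langle\tilde\gamma_{zx},\tilde\gamma_{wy}\rangle$. Then for $A=a[\tilde\gamma_{zx}]+b[\tilde\gamma_{wy}]\in H_1(L)$, $(a,b)\in\mathbb{Z}^2$, the Maslov index is $$\mu(A)=2a\,w(G_{zx})+2b\,w(G_{wy}),$$ where $w(G)=\frac14(\#\text{counterclockwise corners of }G-\#\text{clockwise corners of }G)$.
   Context: Grid conventions. In a plane with coordinates $(a,b)$ (below $(a,b)=(w,y)$ or $(a,b)=(z,x)$), an immersed grid diagram of size $n$ is an $n\times n$ grid of unit cells in $[0,n]^2$ with two kinds of markings at centers of cells, each row and each column containing exactly one marking of each kind; joining each marking of the first kind to the marking of the second kind in its row by an $a$-parallel segment, and each marking of the second kind to the marking of the first kind in its column by a $b$-parallel segment, gives an oriented connected closed piecewise-linear curve, with no crossing information recorded, viewed as an immersion $\gamma:\mathbb{R}/2\pi\mathbb{Z}\to\mathbb{R}^2$, $\theta\mapsto(a(\theta),b(\theta))$. It is a Lagrangian grid diagram if (1) $\int_0^{2\pi}b\,a'\,d\theta=0$ and (2) $\int_{\theta_0}^{\theta_1}b\,a'\,d\theta\neq0$ whenever $\theta_0\neq\theta_1$ and $\gamma(\theta_0)=\gamma(\theta_1)$. For a crossing $c=\gamma(\theta_0)=\gamma(\theta_1)$ put $|\Delta t(c)|=|\int_{\theta_0}^{\theta_1}b\,a'\,d\theta|$.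 The corners are the markings; a corner is counterclockwise (resp. clockwise) if the curve turns left (resp. right) there relative to the orientation of the $(a,b)$-plane. Hypercube diagrams. Let $C=[0,n]^4$ with coordinates $(w,x,y,z)$. A flat is a product in which two coordinates range over $[0,n]$ and the other two over unit intervals $[k,k+1]$, named by its two full coordinates; a cube is a product in which three coordinates range over $[0,n]$ and one over a unit interval. Markings are points with coordinates in $\mathbb{Z}+\frac12$ labelled $W,X,Y,Z$. Marking conditions: each cube contains exactly one marking of each label; each cube contains exactly two flats containing exactly three markings; in each such flat the three markings form a right angle with rays parallel to coordinate axes; its vertex is $W$ iff the flat is a $zw$-flat, $X$ iff a $wx$-flat, $Y$ iff an $xy$-flat, $Z$ iff a $yz$-flat. Join each $W$ to an $X$ by a $w$-parallel segment, each $X$ to a $Y$ by an $x$-parallel segment, each $Y$ to a $Z$ by a $y$-parallel segment and each $Z$ to a $W$ by a $z$-parallel segment; the projections of this oriented curve to the $(w,y)$- and $(z,x)$-planes are immersed grid diagrams $G_{wy}$ ($(a,b)=(w,y)$) and $G_{zx}$ ($(a,b)=(z,x)$). $H\Gamma$ is a Lagrangian hypercube diagram if the marking conditions hold, $G_{wy},G_{zx}$ are Lagrangian grid diagrams, and $|\Delta t(c)|\neq|\Delta t(c')|$ for all crossings $c$ of $G_{zx}$ and $c'$ of $G_{wy}$. Torus and lift. With $G_{zx}$ parametrized by $s\mapsto(z(s),x(s))$ and $G_{wy}$ by $u\mapsto(w(u),y(u))$ (corners slightly smoothed preserving (1),(2)), the torus is $i(s,u)=(w(u),x(s),y(u),z(s))$,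 Lagrangian for $\omega=dw\wedge dy+dz\wedge dx$, with loops $\gamma_{zx}=S^1\times\{1\}$, $\gamma_{wy}=\{1\}\times S^1$. In $\mathbb{R}^5$ with coordinates $(w,x,y,z,t)$ and contact form $dt-y\,dw-x\,dz$, the lift is $L=\{(i(p),t(p))\}$, $t(p)=t_0+\int_\gamma(y\,dw+x\,dz)$ along a path $\gamma$ from a base point to $p$; $\tilde\gamma_{zx},\tilde\gamma_{wy}$ are the lifts of the loops. The Maslov index $\mu:H_1(L)\to\mathbb{Z}$ assigns to a loop the Maslov index of the loop of (unoriented) Lagrangian tangent planes of $i$ along its projection, in the Lagrangian Grassmannian of $(\mathbb{R}^4,\omega)$. *)

(* Defs.v *)
From Stdlib Require Import Reals Lra Lia ZArith Arith List Bool.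
From Coquelicot Require Import Coquelicot.
Open Scope R_scope.
Local Open Scope bool_scope.

Definition cnt (p : nat -> bool) (N : nat) : nat := length (filter p (seq 0 N)).

(* Coordinates are indexed w=0, x=1, y=2, z=3; labels W=0, X=1, Y=2, Z=3.
   A marking with cell indices (k_w,k_x,k_y,k_z) sits at the point
   (k_w+1/2, ..., k_z+1/2).  The oriented closed curve obtained by joining
   W->X (w-parallel), X->Y (x-parallel), Y->Z (y-parallel), Z->W (z-parallel)
   is recorded as the cyclic sequence P 0, P 1, ..., P (4n-1) of its
   markings (P j c = cell index of coordinate c of the j-th marking, whose
   label is j mod 4).  Since the projections must be connected curves,
   the joined curve is a single cycle through all 4n markings.            *)

Definition flat_count (n : nat) (P : nat -> nat -> nat) (c k c' k' : nat) : nat :=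
  cnt (fun j => Nat.eqb (P j c) k && Nat.eqb (P j c') k') (4 * n).

Definition in_flat (P : nat -> nat -> nat) (c k c' k' j : nat) : Prop :=
  P j c = k /\ P j c' = k'.

Definition hypercube_marking_conditions (n : nat) (P : nat -> nat -> nat) : Prop :=
  (1 <= n)%nat /\
  (forall j c, (c < 4)%nat -> (P j c < n)%nat) /\
  (forall j c, P (j + 4 * n)%nat c = P j c) /\
  (forall j c, (c < 4)%nat -> c <> (j mod 4)%nat -> P (S j) c = P j c) /\
  (forall c l k, (c < 4)%nat -> (l < 4)%nat -> (k < n)%nat ->
     cnt (fun j => Nat.eqb (j mod 4) l && Nat.eqb (P j c) k) (4 * n) = 1%nat) /\
  (* each cube {coord c = k} contains exactly two flats with exactly three
     markings; the flats of that cube are {coord c = k, coord c' = k'},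
     c' <> c, encoded by q = c' * n + k' *)
  (forall c k, (c < 4)%nat -> (k < n)%nat ->
     cnt (fun q => negb (Nat.eqb (q / n) c) &&
                   Nat.eqb (flat_count n P c k (q / n) (q mod n)) 3) (4 * n) = 2%nat) /\
  (* right-angle condition: in a flat with three markings, they form a
     right angle with rays parallel to the axes; the vertex has label l
     with: W iff zw-flat, X iff wx-flat, Y iff xy-flat, Z iff yz-flat,
     i.e. the fixed coordinates are {l+1, l+2} (mod 4) and the rays are
     along the axes l and l+3 (mod 4). *)
  (forall c k c' k', (c < 4)%nat -> (c' < 4)%nat -> c <> c' ->
     (k < n)%nat -> (k' < n)%nat -> flat_count n P c k c' k' = 3%nat ->
     exists j0 j1 j2,
       (j0 < 4 * n)%nat /\ (j1 < 4 * n)%nat /\ (j2 < 4 * n)%nat /\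
       j0 <> j1 /\ j0 <> j2 /\ j1 <> j2 /\
       in_flat P c k c' k' j0 /\ in_flat P c k c' k' j1 /\ in_flat P c k c' k' j2 /\
       let l := (j0 mod 4)%nat in
       ((c = ((l + 1) mod 4)%nat /\ c' = ((l + 2) mod 4)%nat) \/
        (c = ((l + 2) mod 4)%nat /\ c' = ((l + 1) mod 4)%nat)) /\
       (forall d, (d < 4)%nat -> d <> l -> P j1 d = P j0 d) /\ P j1 l <> P j0 l /\
       (forall d, (d < 4)%nat -> d <> ((l + 3) mod 4)%nat -> P j2 d = P j0 d) /\
       P j2 ((l + 3) mod 4)%nat <> P j0 ((l + 3) mod 4)%nat).

(* Planar (immersed) grid diagrams, given by the cyclic sequence of    *)
(* their corners V 0, V 1, ..., V (2n-1) (cell indices (a,b)); V (2k)  *)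
(* are the markings of the first kind, V (2k+1) of the second kind;    *)
(* V(2k) -> V(2k+1) is a-parallel, V(2k+1) -> V(2k+2) is b-parallel.   *)

Definition immersed_grid (n : nat) (V : nat -> nat * nat) : Prop :=
  (forall k, V (k + 2 * n)%nat = V k) /\
  (forall k, (fst (V k) < n)%nat /\ (snd (V k) < n)%nat) /\
  (forall k, (k < n)%nat ->
     snd (V (2 * k)%nat) = snd (V (2 * k + 1)%nat) /\
     fst (V (2 * k)%nat) <> fst (V (2 * k + 1)%nat) /\
     fst (V (2 * k + 1)%nat) = fst (V (2 * k + 2)%nat) /\
     snd (V (2 * k + 1)%nat) <> snd (V (2 * k + 2)%nat)) /\
  (forall r, (r < n)%nat ->
     cnt (fun k => Nat.eqb (snd (V (2 * k)%nat)) r) n = 1%nat /\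
     cnt (fun k => Nat.eqb (snd (V (2 * k + 1)%nat)) r) n = 1%nat /\
     cnt (fun k => Nat.eqb (fst (V (2 * k)%nat)) r) n = 1%nat /\
     cnt (fun k => Nat.eqb (fst (V (2 * k + 1)%nat)) r) n = 1%nat).

(* G_wy, (a,b) = (w,y): corners W_j (= proj Z_{j-1}) and X_j (= proj Y_j) *)
Definition Vwy (P : nat -> nat -> nat) (k : nat) : nat * nat :=
  (P (2 * k)%nat 0%nat, P (2 * k)%nat 2%nat).
(* G_zx, (a,b) = (z,x): corners Z_j (= proj Y_j) and W_{j+1} (= proj X_{j+1}) *)
Definition Vzx (P : nat -> nat -> nat) (k : nat) : nat * nat :=
  (P (2 * k + 3)%nat 3%nat, P (2 * k + 3)%nat 1%nat).

Definition va (V : nat -> nat * nat) (k : nat) : R := INR (fst (V k)) + / 2.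
Definition vb (V : nat -> nat * nat) (k : nat) : R := INR (snd (V k)) + / 2.
Definition da (V : nat -> nat * nat) (k : nat) : R := va V (S k) - va V k.
Definition db (V : nat -> nat * nat) (k : nat) : R := vb V (S k) - vb V k.

(* The piecewise-linear immersion gamma : R/2piZ -> R^2 of the grid
   diagram with m = 2n corners: the k-th segment is traversed linearly on
   [2 pi k / m, 2 pi (k+1) / m]. *)
Definition pl_index (m : nat) (th : R) : nat * R :=
  let tau := th * INR m / (2 * PI) in
  let kz := Int_part tau in
  (Z.to_nat (Z.modulo kz (Z.of_nat m)), tau - IZR kz).

Definition pl_a (V : nat -> nat * nat) (m : nat) (th : R) : R :=
  let (k, f) := pl_index m th in va V k + f * da V k.
Definition pl_b (V : nat -> nat * nat) (m : nat) (th : R) : R :=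
  let (k, f) := pl_index m th in vb V k + f * db V k.

Definition action (ca cb : R -> R) (t0 t1 : R) : R :=
  RInt (fun t => cb t * Derive ca t) t0 t1.

Definition lagrangian_conditions (ca cb : R -> R) : Prop :=
  action ca cb 0 (2 * PI) = 0 /\
  (forall t0 t1, 0 <= t0 < 2 * PI -> 0 <= t1 < 2 * PI -> t0 <> t1 ->
     ca t0 = ca t1 -> cb t0 = cb t1 -> action ca cb t0 t1 <> 0).

Definition lagrangian_grid (n : nat) (V : nat -> nat * nat) : Prop :=
  immersed_grid n V /\
  lagrangian_conditions (pl_a V (2 * n)) (pl_b V (2 * n)).

Definition distinct_crossing_actions (n : nat) (V1 V2 : nat -> nat * nat) : Prop :=
  forall t0 t1 u0 u1,
    0 <= t0 < 2 * PI -> 0 <= t1 < 2 * PI -> t0 <> t1 ->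
    pl_a V1 (2 * n) t0 = pl_a V1 (2 * n) t1 -> pl_b V1 (2 * n) t0 = pl_b V1 (2 * n) t1 ->
    0 <= u0 < 2 * PI -> 0 <= u1 < 2 * PI -> u0 <> u1 ->
    pl_a V2 (2 * n) u0 = pl_a V2 (2 * n) u1 -> pl_b V2 (2 * n) u0 = pl_b V2 (2 * n) u1 ->
    Rabs (action (pl_a V1 (2 * n)) (pl_b V1 (2 * n)) t0 t1)
      <> Rabs (action (pl_a V2 (2 * n)) (pl_b V2 (2 * n)) u0 u1).

Definition lagrangian_hypercube (n : nat) (P : nat -> nat -> nat) : Prop :=
  hypercube_marking_conditions n P /\
  lagrangian_grid n (Vzx P) /\ lagrangian_grid n (Vwy P) /\
  distinct_crossing_actions n (Vzx P) (Vwy P).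

(* Slight smoothing of the corners of a grid curve with m corners:     *)
(* a smooth 2pi-periodic immersion (ca, cb) which, on successive        *)
(* parameter intervals [s k, t k] and [t k, s (k+1)], turns the corner  *)
(* V k inside the ball of radius 1/2 around it (tangent in the cone     *)
(* spanned by the incoming and outgoing directions), and then runs      *)
(* straight along the segment [V k, V (k+1)] in its direction.          *)

Definition corner_smoothing (V : nat -> nat * nat) (m : nat) (ca cb : R -> R) : Prop :=
  (forall k x, ex_derive_n ca k x) /\ (forall k x, ex_derive_n cb k x) /\
  (forall t, ca (t + 2 * PI) = ca t /\ cb (t + 2 * PI) = cb t) /\
  (forall t, Derive ca t <> 0 \/ Derive cb t <> 0) /\
  exists s t : nat -> R,
    (forall k, (k < m)%nat -> s k < t k /\ t k < s (S k)) /\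
    s m = s 0%nat + 2 * PI /\
    (forall k th, (k < m)%nat -> s k <= th <= t k ->
       (ca th - va V k) ^ 2 + (cb th - vb V k) ^ 2 < (/ 2) ^ 2 /\
       exists al be, 0 <= al /\ 0 <= be /\
         Derive ca th = al * da V (k + m - 1)%nat + be * da V k /\
         Derive cb th = al * db V (k + m - 1)%nat + be * db V k) /\
    (forall k th, (k < m)%nat -> t k <= th <= s (S k) ->
       exists la mu, 0 < la /\ 0 <= mu <= 1 /\
         Derive ca th = la * da V k /\ Derive cb th = la * db V k /\
         ca th = va V k + mu * da V k /\ cb th = vb V k + mu * db V k).

(* cross product of incoming and outgoing directions at corner k:
   positive iff the curve turns left *)
Definition turn (V : nat -> nat * nat) (m k : nat) : Z :=
  let pa := (Z.of_nat (fst (V k)) - Z.of_nat (fst (V (k + m - 1)%nat)))%Z in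
  let pb := (Z.of_nat (snd (V k)) - Z.of_nat (snd (V (k + m - 1)%nat)))%Z in
  let qa := (Z.of_nat (fst (V (S k))) - Z.of_nat (fst (V k)))%Z in
  let qb := (Z.of_nat (snd (V (S k))) - Z.of_nat (snd (V k)))%Z in
  (pa * qb - pb * qa)%Z.

Definition ccw_corners (V : nat -> nat * nat) (m : nat) : nat :=
  cnt (fun k => Z.ltb 0 (turn V m k)) m.
Definition cw_corners (V : nat -> nat * nat) (m : nat) : nat :=
  cnt (fun k => Z.ltb (turn V m k) 0) m.

Definition grid_winding (V : nat -> nat * nat) (m : nat) : R :=
  (INR (ccw_corners V m) - INR (cw_corners V m)) / 4.

(* Maslov index of a loop of Lagrangian planes in (R^4, dw^dy + dz^dx)  *)

Record R4 := mkR4 { r4w : R; r4x : R; r4y : R; r4z : R }.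

Definition cmul (p q : R * R) : R * R :=
  (fst p * fst q - snd p * snd q, fst p * snd q + snd p * fst q).
Definition csub (p q : R * R) : R * R := (fst p - fst q, snd p - snd q).

(* complex structure compatible with omega: (w,x,y,z) |-> (w + i y, z + i x) *)
Definition cw (v : R4) : R * R := (r4w v, r4y v).
Definition cz (v : R4) : R * R := (r4z v, r4x v).

Definition cdet (e1 e2 : R4) : R * R := csub (cmul (cw e1) (cz e2)) (cmul (cz e1) (cw e2)).

(* Souriau map: for the Lagrangian plane U(R^2) spanned by (e1,e2),
   det(U)^2 = det_C(e1,e2)^2 / |det_C(e1,e2)|^2 *)
Definition souriau (e1 e2 : R4) : R * R :=
  let d := cdet e1 e2 in
  let d2 := cmul d d in
  let N := fst d ^ 2 + snd d ^ 2 in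
  (fst d2 / N, snd d2 / N).

Definition souriau_lift (F : R -> R4 * R4) (th : R -> R) : Prop :=
  (forall t, 0 <= t <= 1 -> continuous th t) /\
  (forall t, 0 <= t <= 1 -> souriau (fst (F t)) (snd (F t)) = (cos (th t), sin (th t))).

Definition maslov_index_is (F : R -> R4 * R4) (mu : R) : Prop :=
  (exists th, souriau_lift F th) /\
  (forall th, souriau_lift F th -> th 1 - th 0 = 2 * PI * mu).

(* tangent frame (d/ds i, d/du i) of i(s,u) = (w(u), x(s), y(u), z(s)),
   where (z(s), x(s)) smooths G_zx and (w(u), y(u)) smooths G_wy *)
Definition torus_frame (z x w y : R -> R) (s u : R) : R4 * R4 :=
  (mkR4 0 (Derive x s) 0 (Derive z s), mkR4 (Derive w u) 0 (Derive y u) 0).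

(* Main.v *)
Require Import Defs.
From Stdlib Require Import Reals ZArith Lra Lia List.
From Coquelicot Require Import Coquelicot.
Open Scope R_scope.

Lemma smooth1 (f : R -> R) : (forall k x, ex_derive_n f k x) ->
  forall x, ex_derive f x.
Proof. intros H x. exact (H 1%nat x). Qed.
Lemma smooth2 (f : R -> R) : (forall k x, ex_derive_n f k x) ->
  forall x, ex_derive (Derive f) x.
Proof. intros H x. exact (H 2%nat x). Qed.
Lemma smooth3 (f : R -> R) : (forall k x, ex_derive_n f k x) ->
  forall x, ex_derive (Derive (Derive f)) x.
Proof. intros H x. exact (H 3%nat x). Qed.

Lemma cont_pt (f : R -> R) x : continuous f x -> continuity_pt f x.
Proof. intro H. apply continuity_pt_filterlim. exact H. Qed.

Lemma pos_stays (f : R -> R) : (forall t, continuous f t) -> (forall t, f t <> 0) ->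
  0 < f 0 -> forall t, 0 < f t.
Proof.
  intros Hc Hn H0 t.
  destruct (Rlt_or_le 0 (f t)) as [h|h]; auto.
  assert (ft : f t < 0) by (destruct h; auto; exfalso; apply (Hn t); auto).
  exfalso.
  destruct (Rtotal_order 0 t) as [lt|[eq|gt]].
  - destruct (Ranalysis5.IVT_interv (fun x => - f x) 0 t) as [c [_ Hc0]]; auto.
    + intros a _. apply cont_pt. apply (continuous_opp f). apply Hc.
    + lra.
    + lra.
    + apply (Hn c). lra.
  - subst. lra.
  - destruct (Ranalysis5.IVT_interv f t 0) as [c [_ Hc0]]; auto.
    + intros a _. apply cont_pt. apply Hc.
    + apply (Hn c). lra.
Qed.

Lemma const_deriv0 (f : R -> R) : (forall t, is_derive f t 0) -> forall t, f t = f 0.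
Proof.
  intros H t.
  destruct (Rtotal_order 0 t) as [lt|[eq|gt]].
  - symmetry. apply (eq_is_derive f 0 t); auto.
  - subst; auto.
  - apply (eq_is_derive f t 0); auto.
Qed.

Lemma angle_exists (ca cb : R -> R) :
  (forall k x, ex_derive_n ca k x) -> (forall k x, ex_derive_n cb k x) ->
  (forall t, Derive ca t <> 0 \/ Derive cb t <> 0) ->
  exists A : R -> R, (forall t, continuous A t) /\
    forall t, Derive ca t = sqrt (Derive ca t ^ 2 + Derive cb t ^ 2) * cos (A t) /\
              Derive cb t = sqrt (Derive ca t ^ 2 + Derive cb t ^ 2) * sin (A t).
Proof.
  intros Ha Hb Hreg.
  set (F := Derive ca). set (G := Derive cb).
  assert (HF : forall x, ex_derive F x) by (apply smooth2; auto).
  assert (HG : forall x, ex_derive G x) by (apply smooth2; auto).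
  assert (HF2 : forall x, ex_derive (Derive F) x) by (apply smooth3; auto).
  assert (HG2 : forall x, ex_derive (Derive G) x) by (apply smooth3; auto).
  assert (HN : forall t, 0 < F t ^ 2 + G t ^ 2).
  { intro t. destruct (Hreg t) as [h|h].
    - pose proof (Rsqr_pos_lt _ h). unfold Rsqr in *. fold F in H. nra.
    - pose proof (Rsqr_pos_lt _ h). unfold Rsqr in *. fold G in H. nra. }
  assert (HN' : forall t, F t * F t + G t * G t <> 0).
  { intros t E. specialize (HN t). nra. }
  set (h := fun t => (F t * Derive G t - G t * Derive F t) / (F t ^ 2 + G t ^ 2)).
  assert (Hhc : forall t, continuous h t).
  { intro t. apply (ex_derive_continuous h). unfold h. auto_derive.
    repeat split; auto.
    replace (F t * (F t * 1) + G t * (G t * 1)) with (F t * F t + G t * G t) by ring; auto. }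
  set (r0 := sqrt (F 0 ^ 2 + G 0 ^ 2)).
  assert (Hr0 : 0 < r0) by (apply sqrt_lt_R0; auto).
  assert (Hr0sq : r0 * r0 = F 0 ^ 2 + G 0 ^ 2) by (apply sqrt_sqrt; left; auto).
  set (p := F 0 / r0). set (q := G 0 / r0).
  assert (Hpq : p ^ 2 + q ^ 2 = 1).
  { unfold p, q. field_simplify; [|lra]. rewrite <- Hr0sq. field. lra. }
  assert (Hp1 : -1 <= p <= 1) by (split; nra).
  set (a0 := if Rle_dec 0 q then acos p else - acos p).
  assert (Ha0 : cos a0 = p /\ sin a0 = q).
  { unfold a0; destruct (Rle_dec 0 q) as [hq|hq].
    - rewrite cos_acos, sin_acos by auto. split; auto.
      replace (1 - p²) with (q ^ 2) by (unfold Rsqr; lra).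
      rewrite sqrt_pow2; auto.
    - rewrite cos_neg, sin_neg, cos_acos, sin_acos by auto. split; auto.
      replace (1 - p²) with ((- q) ^ 2) by (unfold Rsqr; lra).
      rewrite sqrt_pow2; lra. }
  set (A := fun t => a0 + RInt h 0 t).
  assert (HA : forall t, is_derive A t (h t)).
  { intro t. unfold A.
    assert (H1 : is_derive (RInt h 0) t (h t)).
    { apply (is_derive_RInt h (RInt h 0) 0 t).
      - apply filter_forall. intro b. apply (RInt_correct h 0 b).
        apply (ex_RInt_continuous h). intros; apply Hhc.
      - apply Hhc. }
    pose proof (is_derive_plus (fun _ => a0) (RInt h 0) t 0 (h t) (is_derive_const a0 t) H1) as H2.
    simpl in H2. unfold plus, zero in H2; simpl in H2.
    replace (h t) with (Rplus 0 (h t)) by ring. exact H2. }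
  assert (HAc : forall t, continuous A t).
  { intro t. apply (ex_derive_continuous A). exists (h t). auto. }
  assert (HA0 : A 0 = a0) by (unfold A; rewrite RInt_point; unfold zero; simpl; ring).
  assert (HAD : forall t, Derive A t = h t) by (intro; apply is_derive_unique; auto).
  assert (HAe : forall t, ex_derive A t) by (intro t; exists (h t); auto).
  clearbody A. unfold h in HAD. clear h Hhc HA.
  clearbody F G.
  exists A. split; auto.
  set (Q2 := fun t => G t * cos (A t) - F t * sin (A t)).
  assert (HK : forall t, is_derive (fun t => Q2 t ^ 2 / (F t ^ 2 + G t ^ 2)) t 0).
  { intro t. unfold Q2. auto_derive.
    - repeat split; auto.
      replace (F t * (F t * 1) + G t * (G t * 1)) with (F t * F t + G t * G t) by ring; auto.
    - change (Derive (fun x => A x) t) with (Derive A t).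
      change (Derive (fun x => F x) t) with (Derive F t).
      change (Derive (fun x => G x) t) with (Derive G t).
      rewrite HAD. field. auto. }
  pose proof (const_deriv0 _ HK) as HKc.
  assert (HQ20 : Q2 0 = 0).
  { unfold Q2. rewrite HA0. destruct Ha0 as [c s]. rewrite c, s. unfold p, q. field. lra. }
  assert (HQ2 : forall t, Q2 t = 0).
  { intro t. specialize (HKc t). cbv beta in HKc. rewrite HQ20 in HKc.
    specialize (HN t).
    assert (Q2 t ^ 2 = 0).
    { apply (Rmult_eq_reg_r (/ (F t ^ 2 + G t ^ 2))).
      - unfold Rdiv in HKc. rewrite HKc. ring.
      - apply Rgt_not_eq. apply Rinv_0_lt_compat. auto. }
    nra. }
  set (Q1 := fun t => F t * cos (A t) + G t * sin (A t)).
  assert (HQsq : forall t, Q1 t ^ 2 = F t ^ 2 + G t ^ 2).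
  { intro t. pose proof (HQ2 t) as E. unfold Q2 in E. unfold Q1.
    pose proof (sin2_cos2 (A t)) as S. unfold Rsqr in S.
    assert (X : (F t * cos (A t) + G t * sin (A t)) ^ 2 + (G t * cos (A t) - F t * sin (A t)) ^ 2
      = (F t ^ 2 + G t ^ 2) * (sin (A t) * sin (A t) + cos (A t) * cos (A t))) by ring.
    rewrite E, S in X. replace (F t ^ 2 + G t ^ 2) with ((F t ^ 2 + G t ^ 2) * 1) by ring. rewrite <- X. ring. }
  assert (HQ1c : forall t, continuous Q1 t).
  { intro t. apply (ex_derive_continuous Q1). unfold Q1. auto_derive. repeat split; auto. }
  assert (HQ1pos : forall t, 0 < Q1 t).
  { apply pos_stays; auto.
    - intros t E. specialize (HQsq t). rewrite E in HQsq. specialize (HN t). simpl in HQsq. lra.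
    - unfold Q1. rewrite HA0. destruct Ha0 as [c s]. rewrite c, s. unfold p, q.
      replace (F 0 * (F 0 / r0) + G 0 * (G 0 / r0)) with ((r0 * r0) / r0) by (rewrite Hr0sq; field; lra).
      field_simplify; lra. }
  intro t.
  assert (Hs : sqrt (F t ^ 2 + G t ^ 2) = Q1 t).
  { rewrite <- HQsq. apply sqrt_pow2. left; auto. }
  rewrite Hs. pose proof (HQ2 t) as E. unfold Q2 in E. unfold Q1.
  pose proof (sin2_cos2 (A t)) as S. unfold Rsqr in S.
  assert (E' : G t * cos (A t) = F t * sin (A t)) by lra.
  split.
  - replace ((F t * cos (A t) + G t * sin (A t)) * cos (A t)) with
      (F t * (cos (A t) * cos (A t)) + sin (A t) * (G t * cos (A t))) by ring.
    rewrite E'. transitivity (F t * (sin (A t) * sin (A t) + cos (A t) * cos (A t))); [rewrite S; ring | ring].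
  - replace ((F t * cos (A t) + G t * sin (A t)) * sin (A t)) with
      (G t * (sin (A t) * sin (A t)) + cos (A t) * (F t * sin (A t))) by ring.
    rewrite <- E'. transitivity (G t * (sin (A t) * sin (A t) + cos (A t) * cos (A t))); [rewrite S; ring | ring].
Qed.
Lemma ivt_up (h : R -> R) a t v : a < t -> (forall x, a <= x <= t -> continuous h x) ->
  h a < v < h t -> exists c, a <= c <= t /\ h c = v.
Proof.
  intros Hat Hc [H1 H2].
  destruct (Ranalysis5.IVT_interv (fun x => h x - v) a t) as [c [Hc1 Hc2]]; auto.
  - intros x Hx. apply cont_pt. apply (continuous_minus h (fun _ => v)); auto.
    apply continuous_const.
  - lra.
  - lra.
  - exists c. split; auto. lra.
Qed.

Lemma ivt_down (h : R -> R) a t v : a < t -> (forall x, a <= x <= t -> continuous h x) ->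
  h t < v < h a -> exists c, a <= c <= t /\ h c = v.
Proof.
  intros Hat Hc [H1 H2].
  destruct (Ranalysis5.IVT_interv (fun x => v - h x) a t) as [c [Hc1 Hc2]]; auto.
  - intros x Hx. apply cont_pt. apply (continuous_minus (fun _ => v) h); auto.
    apply continuous_const.
  - lra.
  - lra.
  - exists c. split; auto. lra.
Qed.

Lemma zero_lemma (h : R -> R) a b : (forall x, continuous h x) -> h a = 0 ->
  (forall t, a <= t <= b -> sin (h t) = 0) -> forall t, a <= t <= b -> h t = 0.
Proof.
  intros Hc H0 Hs t Ht.
  pose proof PI_RGT_0 as HPI.
  destruct (Rtotal_order (h t) 0) as [lt|[eq|gt]]; auto; exfalso.
  - assert (Hat : a < t) by (destruct (Req_dec a t); [subst; lra | lra]).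
    destruct (Rlt_or_le (- PI) (h t)).
    + pose proof (sin_lt_0_var (h t) H lt) as E. rewrite Hs in E; auto; lra.
    + destruct (ivt_down h a t (- (PI/2)) Hat (fun x _ => Hc x)) as [c [Hc1 Hc2]]; [lra|].
      pose proof (Hs c ltac:(lra)) as E. rewrite Hc2, sin_neg, sin_PI2 in E. lra.
  - assert (Hat : a < t) by (destruct (Req_dec a t); [subst; lra | lra]).
    destruct (Rlt_or_le (h t) PI).
    + pose proof (sin_gt_0 (h t) gt H). rewrite Hs in H1; auto; lra.
    + destruct (ivt_up h a t (PI/2) Hat (fun x _ => Hc x)) as [c [Hc1 Hc2]]; [lra|].
      pose proof (Hs c ltac:(lra)) as E. rewrite Hc2, sin_PI2 in E. lra.
Qed.

Lemma corner_lemma (h : R -> R) a b : (forall x, continuous h x) -> h a = 0 -> a <= b ->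
  (forall t, a <= t <= b -> 0 <= cos (h t) /\ 0 <= sin (h t)) ->
  cos (h b) = 0 -> h b = PI / 2.
Proof.
  intros Hc H0 Hab Hcs Hcb.
  pose proof PI_RGT_0 as HPI.
  assert (Hlt : a < b).
  { destruct Hab; auto. subst. rewrite H0, cos_0 in Hcb. lra. }
  destruct (Rlt_or_le (PI/2) (h b)) as [g|g].
  - exfalso. destruct (Rlt_or_le (h b) (3 * (PI/2))).
    + pose proof (cos_lt_0 _ g H). lra.
    + destruct (ivt_up h a b PI Hlt (fun x _ => Hc x)) as [c [Hc1 Hc2]]; [lra|].
      destruct (Hcs c ltac:(lra)) as [E _]. rewrite Hc2, cos_PI in E. lra.
  - destruct (Rlt_or_le (h b) 0) as [l|l].
    + exfalso. destruct (Rlt_or_le (- PI) (h b)).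
      * pose proof (sin_lt_0_var _ H l). destruct (Hcs b ltac:(lra)). lra.
      * destruct (ivt_down h a b (- (PI/2)) Hlt (fun x _ => Hc x)) as [c [Hc1 Hc2]]; [lra|].
        destruct (Hcs c ltac:(lra)) as [_ E]. rewrite Hc2, sin_neg, sin_PI2 in E. lra.
    + destruct g as [g|g]; auto. exfalso.
      pose proof (cos_gt_0 (h b) ltac:(lra) g). lra.
Qed.

Lemma zero_global (h : R -> R) a : (forall x, continuous h x) -> h a = 0 ->
  (forall t, sin (h t) = 0) -> forall t, h t = 0.
Proof.
  intros Hc H0 Hs t.
  destruct (Rle_or_lt a t).
  - apply (zero_lemma h a t); auto. lra.
  - set (k := fun x => h (- x)).
    assert (Hk : forall x, continuous k x).
    { intro x. unfold k. apply (continuous_comp (fun x => - x) h).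
      - apply (continuity_pt_filterlim (fun x => - x)). apply continuity_pt_opp. apply continuity_pt_id.
      - apply Hc. }
    replace (h t) with (k (- t)) by (unfold k; f_equal; ring).
    apply (zero_lemma k (- a) (- t)); auto.
    + unfold k. rewrite Ropp_involutive. auto.
    + intros; unfold k; auto.
    + lra.
Qed.
Lemma V_per (V : nat -> nat * nat) n : (forall k, V (k + 2 * n)%nat = V k) ->
  forall q k, V (k + q * (2 * n))%nat = V k.
Proof.
  intros H q. induction q as [|q IH]; intro k.
  - f_equal. lia.
  - replace (k + S q * (2 * n))%nat with ((k + q * (2 * n)) + 2 * n)%nat by lia.
    rewrite H. auto.
Qed.

Lemma da_eq0 (V : nat -> nat * nat) k : fst (V (S k)) = fst (V k) -> da V k = 0.
Proof. intro E. unfold da, va. rewrite E. ring. Qed.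
Lemma db_eq0 (V : nat -> nat * nat) k : snd (V (S k)) = snd (V k) -> db V k = 0.
Proof. intro E. unfold db, vb. rewrite E. ring. Qed.
Lemma da_neq0 (V : nat -> nat * nat) k : fst (V (S k)) <> fst (V k) -> da V k <> 0.
Proof. intros E H. apply E. apply INR_eq. unfold da, va in H. lra. Qed.
Lemma db_neq0 (V : nat -> nat * nat) k : snd (V (S k)) <> snd (V k) -> db V k <> 0.
Proof. intros E H. apply E. apply INR_eq. unfold db, vb in H. lra. Qed.

Lemma seg_facts n V : (1 <= n)%nat -> immersed_grid n V -> forall j,
  (db V (2 * j) = 0 /\ da V (2 * j) <> 0) /\ (da V (2 * j + 1) = 0 /\ db V (2 * j + 1) <> 0).
Proof.
  intros Hn [Hp [_ [Hs _]]] j.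
  pose proof (V_per V n Hp) as Hq.
  set (q := (j / n)%nat). set (j' := (j mod n)%nat).
  assert (Hj' : (j' < n)%nat) by (apply Nat.mod_upper_bound; lia).
  assert (Hj : j = (j' + q * n)%nat) by (unfold q, j'; pose proof (Nat.div_mod j n); lia).
  assert (E0 : V (2 * j)%nat = V (2 * j')%nat).
  { rewrite <- (Hq q (2 * j')%nat). f_equal. lia. }
  assert (E1 : V (S (2 * j))%nat = V (2 * j' + 1)%nat).
  { rewrite <- (Hq q (2 * j' + 1)%nat). f_equal. lia. }
  assert (E1' : V (2 * j + 1)%nat = V (2 * j' + 1)%nat).
  { rewrite <- (Hq q (2 * j' + 1)%nat). f_equal. lia. }
  assert (E2 : V (S (2 * j + 1))%nat = V (2 * j' + 2)%nat).
  { rewrite <- (Hq q (2 * j' + 2)%nat). f_equal. lia. }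
  destruct (Hs j' Hj') as [A1 [A2 [A3 A4]]].
  split; split.
  - apply db_eq0. rewrite E0, E1. auto.
  - apply da_neq0. rewrite E0, E1. auto.
  - apply da_eq0. rewrite E1', E2. auto.
  - apply db_neq0. rewrite E1', E2. auto.
Qed.

Lemma da_per (V : nat -> nat * nat) n : (forall k, V (k + 2 * n)%nat = V k) ->
  forall k, da V (k + 2 * n) = da V k /\ db V (k + 2 * n) = db V k.
Proof.
  intros H k. unfold da, db, va, vb.
  replace (S (k + 2 * n)) with (S k + 2 * n)%nat by lia. rewrite !H. split; auto.
Qed.

Lemma corner_geom n V : (1 <= n)%nat -> immersed_grid n V -> forall k,
  da V (k + 2 * n - 1) * da V k + db V (k + 2 * n - 1) * db V k = 0 /\
  IZR (turn V (2 * n) k) = da V (k + 2 * n - 1) * db V k - db V (k + 2 * n - 1) * da V k /\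
  IZR (turn V (2 * n) k) <> 0.
Proof.
  intros Hn HG k.
  pose proof (seg_facts n V Hn HG) as Hsf.
  destruct HG as [Hp _].
  assert (Hturn : IZR (turn V (2 * n) k) = da V (k + 2 * n - 1) * db V k - db V (k + 2 * n - 1) * da V k).
  { unfold turn, da, db, va, vb. cbv zeta.
    replace (S (k + 2 * n - 1)) with (k + 2 * n)%nat by lia. rewrite Hp.
    rewrite minus_IZR, !mult_IZR, !minus_IZR, <- !INR_IZR_INZ. ring. }
  rewrite Hturn.
  destruct (Nat.Even_or_Odd k) as [[j Hj]|[j Hj]].
  - replace (k + 2 * n - 1)%nat with (2 * (j + n - 1) + 1)%nat by lia. subst k.
    destruct (Hsf j) as [[B1 B2] _]. destruct (Hsf (j + n - 1)%nat) as [_ [C1 C2]].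
    rewrite B1, C1. split; [ring|split; auto].
    intro E. apply (Rmult_integral_contrapositive _ _ (conj C2 B2)). lra.
  - replace (k + 2 * n - 1)%nat with (2 * (j + n))%nat by lia. subst k.
    destruct (Hsf j) as [_ [B1 B2]]. destruct (Hsf (j + n)%nat) as [[C1 C2] _].
    rewrite B1, C1. split; [ring|split; auto].
    intro E. apply (Rmult_integral_contrapositive _ _ (conj C2 B2)). lra.
Qed.

Lemma cnt_S (p : nat -> bool) j : cnt p (S j) = (cnt p j + if p j then 1 else 0)%nat.
Proof.
  unfold cnt. rewrite seq_S, filter_app, length_app. simpl. destruct (p j); simpl; lia.
Qed.

Lemma Derive_periodic (f : R -> R) c : (forall x, ex_derive f x) ->
  (forall t, f (t + c) = f t) -> forall x, Derive f (x + c) = Derive f x.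
Proof.
  intros Hd Hp x.
  rewrite <- (Derive_ext (fun t => f (t + c)) f x) by auto.
  symmetry. apply is_derive_unique. auto_derive.
  - auto.
  - change (Derive (fun x => f x) (x + c)) with (Derive f (x + c)). ring.
Qed.

Lemma diff_cs (a b F G F0 G0 r r0 : R) : 0 < r -> 0 < r0 ->
  F = r * cos a -> G = r * sin a -> F0 = r0 * cos b -> G0 = r0 * sin b ->
  cos (a - b) = (F * F0 + G * G0) / (r * r0) /\ sin (a - b) = (G * F0 - F * G0) / (r * r0).
Proof.
  intros Hr Hr0 E1 E2 E3 E4. rewrite cos_minus, sin_minus. subst. split; field; lra.
Qed.

Lemma cont_shift (A : R -> R) c : (forall t, continuous A t) -> forall t, continuous (fun x => A (x + c)) t.
Proof.
  intros H t. apply (continuous_comp (fun x => x + c) A).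
  - apply (continuity_pt_filterlim (fun x => x + c)). apply continuity_pt_plus.
    + apply continuity_pt_id.
    + apply continuity_pt_const. intros u v; auto.
  - apply H.
Qed.

Lemma cont_sub (f g : R -> R) : (forall t, continuous f t) -> (forall t, continuous g t) ->
  forall t, continuous (fun x => f x - g x) t.
Proof. intros Hf Hg t. apply (continuous_minus f g); auto. Qed.

Lemma cont_const (c : R) : forall t, continuous (fun _ : R => c) t.
Proof. intro t. apply continuous_const. Qed.

Lemma div_nonneg x y : 0 <= x -> 0 < y -> 0 <= x / y.
Proof. intros. unfold Rdiv. apply Rmult_le_pos; auto. left. apply Rinv_0_lt_compat. auto. Qed.

Lemma winding n V ca cb A :
  immersed_grid n V -> corner_smoothing V (2 * n) ca cb -> (forall t, continuous A t) ->
  (forall t, Derive ca t = sqrt (Derive ca t ^ 2 + Derive cb t ^ 2) * cos (A t) /\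
             Derive cb t = sqrt (Derive ca t ^ 2 + Derive cb t ^ 2) * sin (A t)) ->
  forall sg, A (sg + 2 * PI) = A sg + 2 * PI * grid_winding V (2 * n).
Proof.
  intros HG Hcs HAc HAcs.
  destruct Hcs as (Ha & Hb & Hper & Hreg & s & t & Hst & Hsm & Hcor & Hstr).
  pose proof PI_RGT_0 as HPI.
  assert (Hn : (1 <= n)%nat).
  { destruct n; [|lia]. simpl in Hsm. lra. }
  set (F := Derive ca) in *. set (G := Derive cb) in *.
  set (r := fun th => sqrt (F th ^ 2 + G th ^ 2)) in *.
  assert (Hr : forall th, 0 < r th).
  { intro th. unfold r. apply sqrt_lt_R0. destruct (Hreg th) as [h|h].
    - pose proof (Rsqr_pos_lt _ h). unfold Rsqr in *. nra.
    - pose proof (Rsqr_pos_lt _ h). unfold Rsqr in *. nra. }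
  assert (Hrr : forall th, r th * r th = F th ^ 2 + G th ^ 2).
  { intro th. unfold r. apply sqrt_sqrt. nra. }
  assert (HFp : forall th, F (th + 2 * PI) = F th).
  { apply Derive_periodic. apply smooth1; auto. intro; apply Hper. }
  assert (HGp : forall th, G (th + 2 * PI) = G th).
  { apply Derive_periodic. apply smooth1; auto. intro; apply Hper. }
  destruct HG as [Hp HGr]. pose proof (corner_geom n V Hn (conj Hp HGr)) as Hgeo.
  pose proof (da_per V n Hp) as Hdp.
  assert (Hsc : forall k, (k < 2 * n)%nat -> forall th, t k <= th <= s (S k) -> A th = A (t k)).
  { intros k Hk th Hth.
    enough (E : (fun x => A x - A (t k)) th = 0) by (simpl in E; lra).
    apply (zero_lemma (fun x => A x - A (t k)) (t k) (s (S k))); auto.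
    - apply cont_sub; auto. apply cont_const.
    - simpl; ring.
    - intros x Hx. simpl.
      destruct (Hstr k x Hk Hx) as (la & mu & Hla & Hmu & E1 & E2 & _).
      destruct (Hst k Hk) as [_ Hts].
      destruct (Hstr k (t k) Hk ltac:(lra)) as (la0 & mu0 & Hla0 & Hmu0 & E3 & E4 & _).
      destruct (HAcs x) as [X1 X2]. destruct (HAcs (t k)) as [X3 X4].
      destruct (diff_cs (A x) (A (t k)) (F x) (G x) (F (t k)) (G (t k)) (r x) (r (t k))
        (Hr x) (Hr (t k)) X1 X2 X3 X4) as [_ S].
      rewrite S, E1, E2, E3, E4. unfold Rdiv.
      replace (la * db V k * (la0 * da V k) - la * da V k * (la0 * db V k)) with 0 by ring. ring. }
  assert (Hstart : forall k, (k < 2 * n)%nat -> exists la, 0 < la /\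
     F (s k) = la * da V (k + 2 * n - 1) /\ G (s k) = la * db V (k + 2 * n - 1)).
  { intros k Hk. destruct k as [|k].
    - assert (Hk' : (2 * n - 1 < 2 * n)%nat) by lia.
      destruct (Hst _ Hk') as [_ Hts].
      replace (S (2 * n - 1)) with (2 * n)%nat in Hts by lia.
      assert (Hx : t (2 * n - 1)%nat <= s (2 * n)%nat <= s (S (2 * n - 1))).
      { replace (S (2 * n - 1)) with (2 * n)%nat by lia. lra. }
      destruct (Hstr _ _ Hk' Hx) as (la & mu & Hla & Hmu & E1 & E2 & _).
      exists la. rewrite Hsm, HFp, HGp in *. simpl. auto.
    - assert (Hk' : (k < 2 * n)%nat) by lia.
      destruct (Hst _ Hk') as [_ Hts].
      destruct (Hstr k (s (S k)) Hk' ltac:(lra)) as (la & mu & Hla & Hmu & E1 & E2 & _).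
      exists la. replace (S k + 2 * n - 1)%nat with (k + 2 * n)%nat by lia.
      destruct (Hdp k) as [D1 D2]. rewrite D1, D2. auto. }
  set (eps := fun k => if Z.ltb 0 (turn V (2 * n) k) then PI / 2
                       else if Z.ltb (turn V (2 * n) k) 0 then - (PI / 2) else 0).
  assert (Hcv : forall k, (k < 2 * n)%nat -> A (t k) - A (s k) = eps k).
  { intros k Hk.
    destruct (Hstart k Hk) as (la0 & Hla0 & E1 & E2).
    destruct (Hgeo k) as (Hdot & Hcross & Hnz).
    destruct (Hst k Hk) as [Hskt _].
    set (di1 := da V (k + 2 * n - 1)) in *. set (di2 := db V (k + 2 * n - 1)) in *.
    set (do1 := da V k) in *. set (do2 := db V k) in *.
    assert (Hcs : forall x, s k <= x <= t k ->
      cos (A x - A (s k)) = la0 * (F x * di1 + G x * di2) / (r x * r (s k)) /\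
      sin (A x - A (s k)) = la0 * (G x * di1 - F x * di2) / (r x * r (s k))).
    { intros x Hx. destruct (HAcs x) as [X1 X2]. destruct (HAcs (s k)) as [X3 X4].
      destruct (diff_cs (A x) (A (s k)) (F x) (G x) (F (s k)) (G (s k)) (r x) (r (s k))
        (Hr x) (Hr (s k)) X1 X2 X3 X4) as [C S].
      rewrite C, S, E1, E2. split; f_equal; ring. }
    assert (Hin : forall x, s k <= x <= t k ->
      0 <= F x * di1 + G x * di2 /\
      exists be, 0 <= be /\ G x * di1 - F x * di2 = be * IZR (turn V (2 * n) k)).
    { intros x Hx. destruct (Hcor k x Hk Hx) as [_ (al & be & Hal & Hbe & D1 & D2)].
      fold di1 di2 do1 do2 in D1, D2. rewrite D1, D2. split.
      - replace ((al * di1 + be * do1) * di1 + (al * di2 + be * do2) * di2)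
          with (al * (di1 * di1 + di2 * di2) + be * (di1 * do1 + di2 * do2)) by ring.
        rewrite Hdot. nra.
      - exists be. split; auto. rewrite Hcross. ring. }
    assert (Hend : F (t k) * di1 + G (t k) * di2 = 0).
    { destruct (Hstr k (t k) Hk ltac:(split; [lra | destruct (Hst k Hk); lra]))
        as (la & mu & Hla & Hmu & D1 & D2 & _).
      fold do1 do2 in D1, D2. rewrite D1, D2.
      replace (la * do1 * di1 + la * do2 * di2) with (la * (di1 * do1 + di2 * do2)) by ring.
      rewrite Hdot. ring. }
    unfold eps.
    destruct (Z.ltb_spec 0 (turn V (2 * n) k)) as [Hpos|Hnpos].
    - apply IZR_lt in Hpos.
      apply (corner_lemma (fun x => A x - A (s k)) (s k) (t k)); auto; try lra.
      + apply cont_sub; auto. apply cont_const.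
      + intros x Hx. simpl. destruct (Hcs x Hx) as [C S]. rewrite C, S.
        destruct (Hin x Hx) as [I1 (be & Hbe & I2)]. rewrite I2.
        split; apply div_nonneg; try (apply Rmult_lt_0_compat; auto).
        * apply Rmult_le_pos; lra.
        * apply Rmult_le_pos; [lra|]. apply Rmult_le_pos; lra.
      + simpl. destruct (Hcs (t k) ltac:(lra)) as [C _]. rewrite C, Hend. unfold Rdiv. ring.
    - destruct (Z.ltb_spec (turn V (2 * n) k) 0) as [Hneg|Hnneg].
      + apply IZR_lt in Hneg.
        enough (E : (fun x => - (A x - A (s k))) (t k) = PI / 2) by (simpl in E; lra).
        apply (corner_lemma (fun x => - (A x - A (s k))) (s k) (t k)); auto; try lra.
        * intro x. apply (continuous_opp (fun x => A x - A (s k))). apply cont_sub; auto. apply cont_const.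
        * intros x Hx. simpl. rewrite cos_neg, sin_neg. destruct (Hcs x Hx) as [C S]. rewrite C, S.
          destruct (Hin x Hx) as [I1 (be & Hbe & I2)]. rewrite I2.
          split.
          -- apply div_nonneg; try (apply Rmult_lt_0_compat; auto). apply Rmult_le_pos; lra.
          -- set (Y := r x * r (s k)). assert (HY : 0 < Y) by (apply Rmult_lt_0_compat; auto).
             assert (0 <= - (la0 * (be * IZR (turn V (2 * n) k))) / Y) by (apply div_nonneg; [ | auto]; assert (0 <= la0 * be) by (apply Rmult_le_pos; lra); nra).
             replace (- (la0 * (be * IZR (turn V (2 * n) k)) / Y)) with (- (la0 * (be * IZR (turn V (2 * n) k))) / Y) by (field; lra). auto.
        * simpl. rewrite cos_neg. destruct (Hcs (t k) ltac:(lra)) as [C _]. rewrite C, Hend. unfold Rdiv. ring.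
      + exfalso. apply Hnz. f_equal. lia. }
  assert (Htele : forall j, (j <= 2 * n)%nat -> A (s j) - A (s 0%nat) =
     PI / 2 * (INR (cnt (fun k => Z.ltb 0 (turn V (2 * n) k)) j)
               - INR (cnt (fun k => Z.ltb (turn V (2 * n) k) 0) j))).
  { induction j as [|j IH]; intro Hj.
    - unfold cnt. simpl. ring.
    - assert (Hj' : (j < 2 * n)%nat) by lia.
      specialize (IH ltac:(lia)).
      destruct (Hst j Hj') as [H1 H2].
      rewrite (Hsc j Hj' (s (S j))) by lra.
      pose proof (Hcv j Hj') as Ec.
      rewrite !cnt_S. unfold eps in Ec.
      destruct (Hgeo j) as (_ & _ & Hnz).
      destruct (Z.ltb_spec 0 (turn V (2 * n) j)); destruct (Z.ltb_spec (turn V (2 * n) j) 0);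
        try lia.
      + cbv iota. rewrite !plus_INR, ?INR_1, ?INR_0. lra.
      + cbv iota. rewrite !plus_INR, ?INR_1, ?INR_0. lra.
      + exfalso. apply Hnz. replace (turn V (2 * n) j) with 0%Z by lia. auto. }
  set (W := 2 * PI * grid_winding V (2 * n)).
  assert (HW : A (s 0%nat + 2 * PI) - A (s 0%nat) = W).
  { rewrite <- Hsm. rewrite (Htele (2 * n)%nat) by lia. unfold W, grid_winding, ccw_corners, cw_corners.
    field. }
  assert (Hpc : forall sg, sin (A (sg + 2 * PI) - A sg) = 0 /\ cos (A (sg + 2 * PI) - A sg) = 1).
  { intro sg. destruct (HAcs (sg + 2 * PI)) as [X1 X2]. destruct (HAcs sg) as [X3 X4].
    destruct (diff_cs _ _ _ _ _ _ _ _ (Hr (sg + 2 * PI)) (Hr sg) X1 X2 X3 X4) as [C S].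
    rewrite C, S. unfold r. rewrite HFp, HGp. fold (r sg). rewrite Hrr.
    assert (Hnz : F sg ^ 2 + G sg ^ 2 <> 0) by (rewrite <- Hrr; apply Rgt_not_eq; apply Rmult_lt_0_compat; auto).
    split; field; auto. }
  destruct (Hpc (s 0%nat)) as [SW CW]. rewrite HW in SW, CW.
  intro sg.
  enough (E : (fun x => A (x + 2 * PI) - A x - W) sg = 0) by (simpl in E; lra).
  apply (zero_global (fun x => A (x + 2 * PI) - A x - W) (s 0%nat)).
  - apply cont_sub. apply cont_sub; auto. apply cont_shift; auto. apply cont_const.
  - simpl. lra.
  - intro x. simpl. rewrite sin_minus, SW, CW. destruct (Hpc x) as [S1 _]. rewrite S1. ring.
Qed.

Lemma zero_lemma_loc (h : R -> R) a b : (forall x, a <= x <= b -> continuous h x) -> h a = 0 ->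
  (forall t, a <= t <= b -> sin (h t) = 0) -> forall t, a <= t <= b -> h t = 0.
Proof.
  intros Hc H0 Hs t Ht.
  pose proof PI_RGT_0 as HPI.
  assert (Hc' : forall x, a <= x <= t -> continuous h x) by (intros; apply Hc; lra).
  destruct (Rtotal_order (h t) 0) as [lt|[eq|gt]]; auto; exfalso.
  - assert (Hat : a < t) by (destruct (Req_dec a t); [subst; lra | lra]).
    destruct (Rlt_or_le (- PI) (h t)).
    + pose proof (sin_lt_0_var (h t) H lt) as E. rewrite Hs in E; auto; lra.
    + destruct (ivt_down h a t (- (PI/2)) Hat Hc') as [c [Hc1 Hc2]]; [lra|].
      pose proof (Hs c ltac:(lra)) as E. rewrite Hc2, sin_neg, sin_PI2 in E. lra.
  - assert (Hat : a < t) by (destruct (Req_dec a t); [subst; lra | lra]).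
    destruct (Rlt_or_le (h t) PI).
    + pose proof (sin_gt_0 (h t) gt H). rewrite Hs in H1; auto; lra.
    + destruct (ivt_up h a t (PI/2) Hat Hc') as [c [Hc1 Hc2]]; [lra|].
      pose proof (Hs c ltac:(lra)) as E. rewrite Hc2, sin_PI2 in E. lra.
Qed.

Lemma wind_int (A : R -> R) w : (forall sg, A (sg + 2 * PI) = A sg + 2 * PI * w) ->
  forall (a : Z) sg, A (sg + 2 * PI * IZR a) = A sg + 2 * PI * IZR a * w.
Proof.
  intros H a. induction a using Z.peano_ind; intro sg.
  - simpl. replace (sg + 2 * PI * 0) with sg by ring. ring.
  - rewrite succ_IZR.
    replace (sg + 2 * PI * (IZR a + 1)) with ((sg + 2 * PI * IZR a) + 2 * PI) by ring.
    rewrite H, IHa. ring.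
  - replace (IZR (Z.pred a)) with (IZR a - 1) by (rewrite <- Z.sub_1_r, minus_IZR; auto).
    pose proof (H (sg + 2 * PI * (IZR a - 1))) as E.
    replace (sg + 2 * PI * (IZR a - 1) + 2 * PI) with (sg + 2 * PI * IZR a) in E by ring.
    rewrite IHa in E. lra.
Qed.

Lemma sc1 x : sin x ^ 2 + cos x ^ 2 = 1.
Proof. pose proof (sin2_cos2 x). unfold Rsqr in H. lra. Qed.

Lemma souriau_calc r1 r2 a b : 0 < r1 -> 0 < r2 ->
  souriau (mkR4 0 (r1 * sin a) 0 (r1 * cos a)) (mkR4 (r2 * cos b) 0 (r2 * sin b) 0)
  = (cos (2 * a + 2 * b), sin (2 * a + 2 * b)).
Proof.
  intros H1 H2.
  unfold souriau, cdet, cw, cz, cmul, csub. simpl.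
  replace (2 * a + 2 * b) with (2 * (a + b)) by ring.
  rewrite cos_2a, sin_2a, cos_plus, sin_plus.
  match goal with |- (?X / ?Y, ?Z / ?Y) = _ =>
    replace Y with ((r1 * r2) ^ 2 * ((sin a ^ 2 + cos a ^ 2) * (sin b ^ 2 + cos b ^ 2))) by ring end.
  rewrite !sc1.
  assert (r1 * r2 <> 0) by (apply Rgt_not_eq; apply Rmult_lt_0_compat; auto).
  f_equal; field; split; lra.
Qed.

Lemma r_pos (ca cb : R -> R) t : Derive ca t <> 0 \/ Derive cb t <> 0 ->
  0 < sqrt (Derive ca t ^ 2 + Derive cb t ^ 2).
Proof.
  intro H. apply sqrt_lt_R0. destruct H as [h|h].
  - pose proof (Rsqr_pos_lt _ h). unfold Rsqr in *. nra.
  - pose proof (Rsqr_pos_lt _ h). unfold Rsqr in *. nra.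
Qed.

Theorem corollary1p1 (n : nat) (P : nat -> nat -> nat)
  (HP : lagrangian_hypercube n P)
  (z x w y : R -> R)
  (Hzx : corner_smoothing (Vzx P) (2 * n) z x)
  (Hzx_lag : lagrangian_conditions z x)
  (Hwy : corner_smoothing (Vwy P) (2 * n) w y)
  (Hwy_lag : lagrangian_conditions w y)
  (a b : Z) (s u : R -> R)
  (Hs : forall t, 0 <= t <= 1 -> continuous s t)
  (Hu : forall t, 0 <= t <= 1 -> continuous u t)
  (Hs1 : s 1 = s 0 + 2 * PI * IZR a)
  (Hu1 : u 1 = u 0 + 2 * PI * IZR b) :
  maslov_index_is (fun t => torus_frame z x w y (s t) (u t))
    (2 * IZR a * grid_winding (Vzx P) (2 * n)
     + 2 * IZR b * grid_winding (Vwy P) (2 * n)).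
Proof.
  destruct HP as (_ & [HGzx _] & [HGwy _] & _).
  pose proof Hzx as Hzx'. pose proof Hwy as Hwy'.
  destruct Hzx' as (Hz1 & Hx1 & _ & Hreg1 & _).
  destruct Hwy' as (Hw1 & Hy1 & _ & Hreg2 & _).
  destruct (angle_exists z x Hz1 Hx1 Hreg1) as (Az & HAzc & HAz).
  destruct (angle_exists w y Hw1 Hy1 Hreg2) as (Aw & HAwc & HAw).
  pose proof (winding n (Vzx P) z x Az HGzx Hzx HAzc HAz) as Wz.
  pose proof (winding n (Vwy P) w y Aw HGwy Hwy HAwc HAw) as Ww.
  set (th := fun t => 2 * Az (s t) + 2 * Aw (u t)).
  assert (Hlift : souriau_lift (fun t => torus_frame z x w y (s t) (u t)) th).
  { split.
    - intros t Ht. unfold th.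
      apply (continuous_plus (fun t => 2 * Az (s t)) (fun t => 2 * Aw (u t))).
      + apply (continuous_mult (fun _ => 2) (fun t => Az (s t))).
        * apply continuous_const.
        * apply (continuous_comp s Az); auto.
      + apply (continuous_mult (fun _ => 2) (fun t => Aw (u t))).
        * apply continuous_const.
        * apply (continuous_comp u Aw); auto.
    - intros t Ht. unfold torus_frame, th. simpl fst. simpl snd.
      destruct (HAz (s t)) as [E1 E2]. destruct (HAw (u t)) as [E3 E4].
      pose proof (r_pos z x (s t) (Hreg1 (s t))) as R1.
      pose proof (r_pos w y (u t) (Hreg2 (u t))) as R2.
      set (r1 := sqrt (Derive z (s t) ^ 2 + Derive x (s t) ^ 2)) in *.
      set (r2 := sqrt (Derive w (u t) ^ 2 + Derive y (u t) ^ 2)) in *.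
      rewrite E1, E2, E3, E4. apply souriau_calc; auto. }
  split; [exists th; exact Hlift|].
  intros th' Hl'.
  destruct Hlift as [Hc Heq]. destruct Hl' as [Hc' Heq'].
  assert (Hcs : forall t, 0 <= t <= 1 -> cos (th' t) = cos (th t) /\ sin (th' t) = sin (th t)).
  { intros t Ht. pose proof (Heq t Ht) as A1. pose proof (Heq' t Ht) as A2.
    rewrite A1 in A2. injection A2. auto. }
  assert (Hd : forall t, 0 <= t <= 1 -> sin (th' t - th t) = 0 /\ cos (th' t - th t) = 1).
  { intros t Ht. destruct (Hcs t Ht) as [C S]. rewrite sin_minus, cos_minus, C, S.
    split; [ring|]. pose proof (sc1 (th t)). lra. }
  destruct (Hd 0 ltac:(lra)) as [S0 C0].
  set (c0 := th' 0 - th 0) in *.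
  assert (Hz : forall t, 0 <= t <= 1 -> (fun t => th' t - th t - c0) t = 0).
  { apply zero_lemma_loc.
    - intros t Ht. apply (continuous_minus (fun t => th' t - th t) (fun _ => c0)).
      + apply (continuous_minus th' th); auto.
      + apply continuous_const.
    - unfold c0. ring.
    - intros t Ht. rewrite sin_minus, S0, C0. destruct (Hd t Ht) as [S1 _]. rewrite S1. ring. }
  specialize (Hz 1 ltac:(lra)). simpl in Hz.
  assert (E : th' 1 - th' 0 = th 1 - th 0) by (unfold c0 in Hz; lra).
  rewrite E. unfold th. rewrite Hs1, Hu1, (wind_int Az _ Wz), (wind_int Aw _ Ww). ring.
Qed.
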